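(* Suppose $\gamma>0$ and $\int^\infty\frac{\mathrm{d}x}{R(x)}<\infty$. Then for all $b>0$ and all $\lambda>0$, $\sum_{n=0}^\infty\lambda^nW_n(b)<\infty$.
   Context: Let $\Psi(\lambda)=\gamma\lambda+\frac{\sigma^2}{2}\lambda^2+\int_0^\infty(e^{-\lambda z}-1+\lambda z)\,\pi(\mathrm{d}z)$ for $\lambda\ge0$, with $\sigma\ge0$ and $\pi$ a measure on $(0,\infty)$ with $\int_0^\infty(z\wedge z^2)\pi(\mathrm{d}z)<\infty$. $R$ is continuous on $[0,\infty)$ and strictly positive on $(0,\infty)$. $W$ is the scale function associated with $\Psi$: $W(x)=0$ for $x<0$, $W$ continuous strictly increasing on $[0,\infty)$ with $\int_0^\infty e^{-qy}W(y)\mathrm{d}y=1/\Psi(q)$ for $q>0$. $W_0(x)=1$ and $W_{n+1}(x)=\int_x^\infty\frac{W(z-x)}{R(z)}W_n(z)\,\mathrm{d}z$ for $x\ge0$, $n\ge0$. *)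

(* Defs.v *)
From HB Require Import structures.
From mathcomp Require Import all_boot all_order all_algebra.
From mathcomp Require Import all_classical all_reals all_analysis.
Set Implicit Arguments. Unset Strict Implicit. Unset Printing Implicit Defensive.
Import Order.TTheory GRing.Theory Num.Theory.
Import numFieldNormedType.Exports.
Local Open Scope classical_set_scope.
Local Open Scope ring_scope.

(* The integrand is nonnegative; under the integrability hypothesis on pi
   the integral is finite, and we take its real value. *)
Definition Psi {R : realType} (gamma sigma : R)
  (pi : {measure set (measurableTypeR R) -> \bar R}) (lam : R) : R :=
  gamma * lam + sigma ^+ 2 / 2 * lam ^+ 2
  + fine (\int[pi]_(z in `]0, +oo[) (expR (- (lam * z)) - 1 + lam * z)%:E).

Fixpoint Wn {R : realType} (W Rf : R -> R) (n : nat) : R -> \bar R :=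
  match n with
  | 0%N => fun _ => 1%E
  | n'.+1 => fun x =>
      (\int[@lebesgue_measure R]_(z in `[x, +oo[)
          ((W (z - x) / Rf z)%:E * Wn W Rf n' z))%E
  end.

(* Main.v *)
Require Import Defs.
From HB Require Import structures.
From mathcomp Require Import all_boot all_order all_algebra.
From mathcomp Require Import all_classical all_reals all_analysis.
From mathcomp Require Import ring lra measurable_realfun.
Import Order.TTheory GRing.Theory Num.Theory.
Import numFieldNormedType.Exports.
Local Open Scope classical_set_scope.
Local Open Scope ring_scope.

Section Helpers.
Set Implicit Arguments. Unset Strict Implicit. Unset Printing Implicit Defensive.
Section IntMono.
Import HBNNSimple.
Lemma int_mono d (T : measurableType d) (R : realType) (mu : {measure set T -> \bar R})
  (D : set T) (f g : T -> \bar R) :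
  (forall x, D x -> 0 <= f x)%E -> (forall x, D x -> f x <= g x)%E ->
  (\int[mu]_(x in D) f x <= \int[mu]_(x in D) g x)%E.
Proof.
move=> f0 fg.
rewrite !ge0_integralE//; last by move=> x Dx; exact: le_trans (f0 x Dx) (fg x Dx).
apply: ereal_sup_le => _ [h hf <-]; exists h => //= x.
apply: le_trans (hf x) _; exact: lee_restrict.
Qed.
End IntMono.

Lemma Psi_ge (R : realType) (gamma sigma : R)
  (pi : {measure set (measurableTypeR R) -> \bar R}) q :
  0 < q -> gamma * q <= Psi gamma sigma pi q.
Proof.
move=> q0; rewrite /Psi -addrA lerDl addr_ge0//.
  by rewrite mulr_ge0// ?divr_ge0// ?sqr_ge0// exprn_ge0.
apply: fine_ge0; apply: integral_ge0 => z _; rewrite lee_fin.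
have := expR_ge1Dx (- (q * z)); lra.
Qed.


Lemma W_mono (R : realType) (W : R -> R) :
  {in `[0, +oo[ &, forall x y, x < y -> W x < W y} ->
  forall x y, 0 <= x -> x <= y -> W x <= W y.
Proof.
move=> Winc x y x0 xy; have [->//|xy'] := eqVneq x y.
apply/ltW/Winc; rewrite ?in_itv/= ?andbT//; first exact: le_trans xy.
by rewrite lt_neqAle xy' xy.
Qed.

Lemma W_bound (R : realType) (gamma sigma : R)
  (pi : {measure set (measurableTypeR R) -> \bar R}) (W : R -> R) :
  0 < gamma -> (forall y, 0 <= y -> 0 <= W y) ->
  {in `[0, +oo[ &, forall x y, x < y -> W x < W y} ->
  (forall q, 0 < q ->
     (\int[@lebesgue_measure R]_(y in `[0%R, +oo[) (expR (- (q * y)) * W y)%:E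
      = ((Psi gamma sigma pi q)^-1)%:E)%E) ->
  forall x, 0 <= x -> W x <= 2 * expR 1 / gamma.
Proof.
move=> g0 W0 Winc Lap x x0.
set q := (2 * x + 1)^-1.
have q0 : 0 < q by rewrite invr_gt0; lra.
set A := `[x, 2 * x + 1].
set k := W x * (expR 1)^-1.
have k0 : 0 <= k by rewrite mulr_ge0 ?W0// invr_ge0 expR_ge0.
have H : (\int[@lebesgue_measure R]_(y in `[0%R, +oo[) (k * \1_[set` A] y)%:E <=
          ((Psi gamma sigma pi q)^-1)%:E)%E.
  rewrite -Lap//; apply: int_mono => y; rewrite /= in_itv/= andbT => y0.
    by rewrite lee_fin; apply: mulr_ge0 => //; exact: indic_ge0.
  rewrite lee_fin indicE; case: (boolP (y \in _)) => yA; last first.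
    by rewrite mulr0 mulr_ge0 ?expR_ge0 ?W0.
  move: yA; rewrite inE /= in_itv/= => /andP[xy y2].
  rewrite mulr1 /k mulrC; apply: ler_pM; rewrite ?W0 ?invr_ge0 ?expR_ge0//.
    rewrite -expRN ler_expR /q lerN2 -[leRHS](mulVf (x:=2 * x + 1)); last lra.
    by rewrite ler_wpM2l// ?invr_ge0; lra.
  exact: W_mono.
have E1 : (\int[@lebesgue_measure R]_(y in `[0%R, +oo[) (k * \1_[set` A] y)%:E =
   k%:E * \int[@lebesgue_measure R]_(y in `[0%R, +oo[) (\1_[set` A] y)%:E)%E.
  under eq_integral do rewrite EFinM.
  apply: ge0_integralZl_EFin => //.
  by apply/measurable_EFinP; exact: measurable_indic.
rewrite E1 in H.
rewrite integral_indic// setIidl in H; last first.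
  by move=> y /=; rewrite !in_itv/= => /andP[xy _]; rewrite andbT (le_trans x0).
have hm : (@lebesgue_measure R `[x, 2 * x + 1] = (2 * x + 1 - x)%:E)%classic.
  by rewrite lebesgue_measure_itv/= ifT ?lte_fin -?EFinB//; lra.
rewrite /A in H.
change (is_true (k%:E * @lebesgue_measure R [set` `[x, (2 * x + 1)%R]] <= ((Psi gamma sigma pi q)^-1)%:E)%E) in H.
rewrite hm in H.
rewrite -EFinM lee_fin in H.
have P := Psi_ge gamma sigma pi q0.
have Pq : (Psi gamma sigma pi q)^-1 <= (gamma * q)^-1.
  by rewrite lef_pV2 ?posrE ?mulr_gt0// (lt_le_trans _ P)// mulr_gt0.
have h := le_trans H Pq.
have e0 : 0 < expR 1 :> R by exact: expR_gt0.
have ig0 : 0 < gamma^-1 by rewrite invr_gt0.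
move: h; rewrite /k /q invfM invrK.
set e := expR 1 in e0 *; set ig := gamma^-1 in ig0 *.
have ee : e * e^-1 = 1 by rewrite mulfV// gt_eqF.
have ie0 : 0 < e^-1 by rewrite invr_gt0.
set ie := e^-1 in ee ie0 *.
move=> h.
have h1 : W x * (x + 1) <= e * ((2 * x + 1) * ig).
  have -> : W x * (x + 1) = e * (W x * ie * (2 * x + 1 - x)).
    have -> : e * (W x * ie * (2 * x + 1 - x)) = (e * ie) * (W x * (x + 1)) by ring.
    by rewrite ee mul1r.
  by rewrite ler_pM2l// [leRHS]mulrC.
have h2 : W x * (x + 1) <= 2 * e * ig * (x + 1).
  apply: le_trans h1 _.
  have : e * ig * (2 * x + 1) <= e * ig * (2 * x + 2).
    by rewrite ler_pM2l ?mulr_gt0//; lra.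
  by move=> hh; apply: le_trans (le_trans _ hh) _; rewrite le_eqVlt; apply/orP; left; apply/eqP; ring.
by rewrite -(ler_pM2r (_ : 0 < x + 1)); lra.
Qed.


Lemma int_indic_itv (R : realType) (D : set R) (a b k : R) :
  measurable D -> [set` `[a, b]] `<=` D -> a <= b -> 0 <= k ->
  (\int[@lebesgue_measure R]_(x in D) (k * \1_[set` `[a, b]] x)%:E = (k * (b - a))%:E)%E.
Proof.
move=> mD sD ab k0.
under eq_integral do rewrite EFinM.
rewrite ge0_integralZl_EFin//; try (by move=> y _; rewrite lee_fin indic_ge0);
  try (by apply/measurable_EFinP; exact: measurable_indic).
rewrite integral_indic// setIidl//.
have hm : (@lebesgue_measure R `[a, b] = (b - a)%:E)%classic.
  move: ab; rewrite le_eqVlt => /predU1P[<-|ab].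
    by rewrite lebesgue_measure_itv/= lte_fin ltxx subrr.
  by rewrite lebesgue_measure_itv/= lte_fin ab -EFinB.
by rewrite EFinM; congr (_ * _)%E; rewrite -hm.
Qed.

Lemma mexp (R : realType) (D : set R) q : measurable_fun D (fun y : R => expR (- (q * y))).
Proof.
apply: measurable_funS (@measurableT _ R) (@subsetT _ D) _.
apply: measurableT_comp; first exact: measurable_expR.
apply: measurable_funN; apply: measurable_funM => //; exact: measurable_id.
Qed.

Lemma W0_ge0 (R : realType) (gamma sigma : R)
  (pi : {measure set (measurableTypeR R) -> \bar R}) (W : R -> R) :
  0 < gamma -> {within `[0, +oo[, continuous W} ->
  {in `[0, +oo[ &, forall x y, x < y -> W x < W y} ->
  (forall q, 0 < q ->
     (\int[@lebesgue_measure R]_(y in `[0%R, +oo[) (expR (- (q * y)) * W y)%:E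
      = ((Psi gamma sigma pi q)^-1)%:E)%E) ->
  0 <= W 0.
Proof.
move=> g0 cW Winc Lap.
have mW : measurable_fun (`[0%R, +oo[ : set R) W.
  by apply: subspace_continuous_measurable_fun => //; exact: measurable_itv.
rewrite leNgt; apply/negP => W0neg.
have [t t0 Wt] : exists2 t, 0 < t & W t < 0.
  case: (pselect (exists2 t, 0 < t & W t < 0)) => // hn.
  have /continuous_within_itvcyP [_ cr] := cW.
  have : [set x : R | 0 <= x] (W 0).
    refine (@closed_cvg _ _ _ _ W [set x : R | 0 <= x] (@closed_ge R 0) _ (W 0) cr).
    near=> x.
    have x0 : 0 < x by near: x; exact: nbhs_right_gt.
    rewrite /= leNgt; apply/negP => Wx; apply: hn; by exists x.
  by rewrite /= leNgt W0neg.
set c := - W t.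
have c0 : 0 < c by rewrite oppr_gt0.
set del := Num.min t 1.
have del0 : 0 < del by rewrite lt_min t0 ltr01.
have del1 : del <= 1 by rewrite ge_min lexx orbT.
have Wle y : 0 <= y -> y <= del -> W y <= - c.
  move=> y0 yd; rewrite opprK; apply: W_mono => //.
  by apply: le_trans yd _; rewrite ge_min lexx.
pose g q y := expR (- (q * y)) * W y.
have mg (q : R) : measurable_fun (`[0%R, +oo[ : set R) (fun y => (g q y)%:E).
  by apply/measurable_EFinP; apply: measurable_funM => //; exact: mexp.
have h1 := Lap 1 ltr01; rewrite integralE in h1.
have : (\int[lebesgue_measure]_(x in `[0%R, +oo[) ((fun y => (g 1 y)%:E)^\+ x) -
        \int[lebesgue_measure]_(x in `[0%R, +oo[) ((fun y => (g 1 y)%:E)^\- x))%E \is a fin_num.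
  by rewrite h1.
rewrite fin_numB => /andP[Pf _].
set P1 := (\int[lebesgue_measure]_(x in `[0%R, +oo[) _)%E in Pf.
set p1 := fine P1.
have p10 : 0 <= p1 by apply: fine_ge0; apply: integral_ge0 => y _; exact: funepos_ge0.
have P1E : P1 = p1%:E by rewrite fineK.
pose e : R := expR 1.
have e0 : 0 < e by exact: expR_gt0.
pose a := 2 * e ^+ 2 * p1 / (c * del ^+ 2).
have a0 : 0 <= a.
  rewrite /a divr_ge0//; last by rewrite mulr_ge0 ?exprn_ge0 ?(ltW c0) ?(ltW del0).
  by rewrite mulr_ge0// mulr_ge0// exprn_ge0// ltW.
have id0 : 0 < del^-1 by rewrite invr_gt0.
pose q := a + del^-1 + 1.
have q1 : 1 <= q by rewrite /q; lra.
have q0 : 0 < q by rewrite /q; lra.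
have qd : del^-1 <= q by rewrite /q; lra.
pose kq := expR (- ((q - 1) * del)).
have HP : (\int[lebesgue_measure]_(x in `[0%R, +oo[) ((fun y => (g q y)%:E)^\+ x) <= kq%:E * P1)%E.
  rewrite /P1 -ge0_integralZl_EFin //; try (by move=> y _; exact: funepos_ge0);
    try (exact: measurable_funepos (mg 1)); try (exact: expR_ge0).
  apply: int_mono => y; rewrite /= in_itv/= andbT => y0; first exact: funepos_ge0.
  rewrite !funeposE -!EFin_max -EFinM lee_fin.
  case: (leP (W y) 0) => Wy.
    have gq : g q y <= 0 by rewrite /g mulr_ge0_le0 // expR_ge0.
    rewrite (max_r gq); apply: mulr_ge0; first exact: expR_ge0.
    by rewrite le_max lexx orbT.
  have ydel : del <= y.
    rewrite leNgt; apply/negP => yd; have := Wle y y0 (ltW yd); lra.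
  have gq0 : 0 < g q y by rewrite /g mulr_gt0 ?expR_gt0.
  have g10 : 0 < g 1 y by rewrite /g mulr_gt0 ?expR_gt0.
  rewrite (max_l (ltW gq0)) (max_l (ltW g10)).
  rewrite /g mulrA -expRD ler_pM2r // ler_expR.
  have : (q - 1) * del <= (q - 1) * y by rewrite ler_wpM2l // subr_ge0.
  lra.
have iq0 : 0 < q^-1 by rewrite invr_gt0.
have iqd : q^-1 <= del.
  by rewrite -[del]invrK lef_pV2 ?posrE.
have ie0 : 0 < e^-1 by rewrite invr_gt0.
have HN : (((c * e^-1) * (q^-1 - 0))%:E <=
   \int[lebesgue_measure]_(x in `[0%R, +oo[) ((fun y => (g q y)%:E)^\- x))%E.
  rewrite -(@int_indic_itv _ `[0%R, +oo[)//; last 3 first.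
  - by move=> y /=; rewrite !in_itv/= => /andP[-> _].
  - exact: ltW.
  - by rewrite mulr_ge0// ltW.
  apply: int_mono => y; rewrite /= in_itv/= andbT => y0.
    by rewrite lee_fin mulr_ge0 ?indic_ge0// mulr_ge0// ltW.
  rewrite funenegE -EFin_max lee_fin indicE.
  case: (boolP (y \in _)) => yA; last first.
    by rewrite mulr0 le_max lexx orbT.
  move: yA; rewrite inE /= in_itv/= => /andP[_ yq].
  rewrite mulr1 le_max; apply/orP; left.
  rewrite /g -mulrN mulrC; apply: ler_pM; rewrite ?(ltW c0) ?(ltW ie0)//.
    rewrite /e -expRN ler_expR lerN2.
    by rewrite -(@mulfV _ q) ?gt_eqF// ler_wpM2l// ltW.
  by have := Wle y y0 (le_trans yq iqd); lra.
have hq := Lap q q0; rewrite integralE in hq.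
have := leeB HP HN; rewrite hq P1E -EFinM -EFinB lee_fin subr0 => hq'.
have Ps0 : 0 < (Psi gamma sigma pi q)^-1.
  by rewrite invr_gt0 (lt_le_trans _ (Psi_ge gamma sigma pi q0))// mulr_gt0.
have stepA : c * e^-1 * q^-1 < kq * p1 by lra.
pose E2 := expR (q * del).
have E20 : 0 < E2 by exact: expR_gt0.
have kE : kq * E2 = expR del by rewrite /kq /E2 -expRD; congr expR; ring.
have ed : expR del <= e by rewrite /e ler_expR.
have E2ge : 1 + (q * del) ^+ 2 / 2 <= E2 by exact: (@expR_ge1Dxn R (q * del) 1 (mulr_ge0 (ltW q0) (ltW del0))).
have ee : e * e^-1 = 1 by rewrite mulfV// gt_eqF.
have qq : q * q^-1 = 1 by rewrite mulfV// gt_eqF.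
have stepB : c * E2 < e ^+ 2 * q * p1.
  have h : c * e^-1 * q^-1 * (e * q * E2) < kq * p1 * (e * q * E2).
    by rewrite ltr_pM2r// !mulr_gt0.
  have -> : c * E2 = c * e^-1 * q^-1 * (e * q * E2).
    have -> : c * e^-1 * q^-1 * (e * q * E2) = (e * e^-1) * (q * q^-1) * (c * E2) by ring.
    by rewrite ee qq !mul1r.
  apply: (lt_le_trans h).
  have -> : kq * p1 * (e * q * E2) = (kq * E2) * (p1 * e * q) by ring.
  rewrite kE.
  have -> : e ^+ 2 * q * p1 = e * (p1 * e * q) by ring.
  by apply: ler_wpM2r => //; rewrite !mulr_ge0// ltW.
have hA : a * (c * del ^+ 2) = 2 * e ^+ 2 * p1.
  by rewrite /a mulfVK// mulf_neq0 ?expf_neq0 ?gt_eqF.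
have h3 : (c * del ^+ 2 * q / 2) * q < (c * del ^+ 2 * q / 2) * a.
  have h4 : c * ((q * del) ^+ 2 / 2) < c * E2.
    rewrite ltr_pM2l//; apply: lt_le_trans E2ge; lra.
  have -> : c * del ^+ 2 * q / 2 * a = e ^+ 2 * q * p1.
    have -> : e ^+ 2 * q * p1 = q * (2 * e ^+ 2 * p1) / 2 by field.
    by rewrite -hA; ring.
  apply: lt_trans stepB; apply: le_lt_trans h4; rewrite le_eqVlt; apply/orP; left; apply/eqP; ring.
rewrite ltr_pM2l in h3; last by rewrite !mulr_gt0 ?exprn_gt0// invr_gt0.
have : a < q by rewrite /q; lra.
by rewrite ltNge (ltW h3).
Unshelve. all: by end_near. Qed.


Lemma cvgXn (R : realType) {T} (F : set_system T) {FF : Filter F} (f : T -> R) (a : R) n :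
  f @ F --> a -> (fun x => f x ^+ n) @ F --> a ^+ n.
Proof.
move=> fa; elim: n => [|n ih].
  rewrite expr0; under eq_fun do rewrite expr0; exact: cvg_cst.
rewrite exprS; under eq_fun do rewrite exprS; exact: cvgM.
Qed.

Definition PP (R : realType) (Rf : R -> R) (c0 x : R) : R :=
  (\int[@lebesgue_measure R]_(t in `[c0, x]) (Rf t)^-1)%R.

Lemma cRi (R : realType) (Rf : R -> R) :
  {within `[0, +oo[, continuous Rf} -> (forall x, 0 < x -> 0 < Rf x) ->
  forall t, 0 < t -> {for t, continuous (fun x => (Rf x)^-1)}.
Proof.
move=> cR Rpos t t0; apply: continuousV; first by rewrite gt_eqF// Rpos.
have /continuous_within_itvcyP[h _] := cR.
by apply: h; rewrite in_itv/= andbT.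
Qed.

Lemma intR (R : realType) (Rf : R -> R) :
  {within `[0, +oo[, continuous Rf} -> (forall x, 0 < x -> 0 < Rf x) ->
  forall c0 y, 0 < c0 ->
  (@lebesgue_measure R).-integrable `[c0, y] (EFin \o (fun t => (Rf t)^-1)).
Proof.
move=> cR Rpos c0 y c00.
apply: continuous_compact_integrable; first exact: segment_compact.
apply: continuous_in_subspaceT => t; rewrite inE/= in_itv/= => /andP[ct _].
by apply: (cRi cR Rpos); exact: lt_le_trans ct.
Qed.

Lemma PP_deriv (R : realType) (Rf : R -> R) :
  {within `[0, +oo[, continuous Rf} -> (forall x, 0 < x -> 0 < Rf x) ->
  forall c0 z, 0 < c0 -> c0 < z ->
  derivable (PP Rf c0) z 1 /\ derive1 (PP Rf c0) z = (Rf z)^-1.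
Proof.
move=> cR Rpos c0 z c00 cz.
apply: (@continuous_FTC1_closed R (fun t => (Rf t)^-1) c0 z (z + 1)) => //.
- by rewrite ltrDl.
- exact: intR.
- by apply: (cRi cR Rpos); exact: lt_trans cz.
Qed.

Lemma PP_nd (R : realType) (Rf : R -> R) :
  {within `[0, +oo[, continuous Rf} -> (forall x, 0 < x -> 0 < Rf x) ->
  forall c0, 0 < c0 -> {homo PP Rf c0 : x y / x <= y}.
Proof.
move=> cR Rpos c0 c00 x y xy.
rewrite /PP /Rintegral; apply: fine_le.
- exact: integrable_fin_num (intR cR Rpos x c00).
- exact: integrable_fin_num (intR cR Rpos y c00).
have /integrableP[my _] := intR cR Rpos y c00.
apply: ge0_subset_integral => //.
- move=> t; rewrite /= in_itv/= => /andP[ct _]; rewrite lee_fin invr_ge0 ltW// Rpos//.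
  exact: lt_le_trans ct.
- by apply: subset_itvl; rewrite bnd_simp.
Qed.

Lemma PP_ub (R : realType) (Rf : R -> R) :
  {within `[0, +oo[, continuous Rf} -> (forall x, 0 < x -> 0 < Rf x) ->
  forall c0 a, 0 < c0 -> c0 <= a ->
  (\int[@lebesgue_measure R]_(x in `[a%R, +oo[) ((Rf x)^-1)%:E < +oo)%E ->
  exists M, forall x, PP Rf c0 x <= M.
Proof.
move=> cR Rpos c0 a c00 ca Ia.
have mI : measurable_fun (`[c0, +oo[ : set R) (EFin \o fun t => (Rf t)^-1).
  apply/measurable_EFinP; apply: subspace_continuous_measurable_fun => //.
  apply: continuous_in_subspaceT => t; rewrite inE/= in_itv/= andbT => ct.
  by apply: (cRi cR Rpos); exact: lt_le_trans ct.
have f0 t : c0 <= t -> (0 <= ((Rf t)^-1)%:E)%E.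
  by move=> ct; rewrite lee_fin invr_ge0 ltW// Rpos// (lt_le_trans c00).
have split : [set` `[c0, +oo[] = [set` `[c0, a[] `|` [set` `[a, +oo[] :> set R.
  by apply: itv_bndbnd_setU; rewrite bnd_simp.
have Ifin : (\int[@lebesgue_measure R]_(x in `[c0, +oo[) ((Rf x)^-1)%:E < +oo)%E.
  rewrite split ge0_integral_setU//; last 3 first.
  - by rewrite -split.
  - by move=> t; rewrite -split /= in_itv/= andbT; exact: f0.
  - apply/disj_setPS => t [] /=; rewrite !in_itv/= => /andP[_ ta] /andP[aT _].
    by move: (lt_le_trans ta aT); rewrite ltxx.
  apply: lte_add_pinfty => //.
  apply: (le_lt_trans (y := (\int[@lebesgue_measure R]_(x in `[c0, a]) ((Rf x)^-1)%:E)%E)).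
    have /integrableP[my _] := intR cR Rpos a c00.
    apply: ge0_subset_integral => //.
    - by move=> t; rewrite /= in_itv/= => /andP[ct _]; exact: f0.
    - by apply: subset_itvl; rewrite bnd_simp.
  have : (\int[@lebesgue_measure R]_(x in `[c0, a]) ((Rf x)^-1)%:E)%E \is a fin_num.
    by apply: integrable_fin_num => //; exact: intR.
  rewrite ge0_fin_numE//; apply: integral_ge0 => t.
  by rewrite /= in_itv/= => /andP[ct _]; exact: f0.
exists (fine (\int[@lebesgue_measure R]_(x in `[c0, +oo[) ((Rf x)^-1)%:E)%E) => x.
rewrite /PP /Rintegral; apply: fine_le.
- exact: integrable_fin_num (intR cR Rpos x c00).
- rewrite ge0_fin_numE//; apply: integral_ge0 => t.
  by rewrite /= in_itv/= andbT; exact: f0.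
- apply: ge0_subset_integral => //.
  - by move=> t; rewrite /= in_itv/= andbT; exact: f0.
  - by apply: subset_itvl; rewrite bnd_simp.
Qed.

Lemma FTC_step (R : realType) (Rf : R -> R) :
  {within `[0, +oo[, continuous Rf} -> (forall x, 0 < x -> 0 < Rf x) ->
  forall c0 K n (D x : R), 0 < c0 -> c0 < x -> 0 <= D ->
  (PP Rf c0 z @[z --> +oo] --> K) -> (forall z, PP Rf c0 z <= K) ->
  (\int[@lebesgue_measure R]_(z in `[x, +oo[) (D * (K - PP Rf c0 z) ^+ n * (Rf z)^-1)%:E
   = (D / n.+1%:R * (K - PP Rf c0 x) ^+ n.+1)%:E)%E.
Proof.
move=> cR Rpos c0 K n D x c00 cx D0 PK PleK.
set P := PP Rf c0.
pose Phi := (- (D / n.+1%:R)) \*: ((cst K - P) ^+ n.+1).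
have PhiE z : Phi z = - (D / n.+1%:R) * (K - P z) ^+ n.+1.
  by rewrite /Phi /= exprfctE.
have dP z : c0 < z -> is_derive z 1 P (Rf z)^-1.
  move=> cz; have [dz dE] := PP_deriv cR Rpos c00 cz.
  by rewrite -dE derive1E; exact: derivableP.
have dPhi z : c0 < z -> is_derive z 1 Phi (D * (K - P z) ^+ n * (Rf z)^-1).
  move=> cz; have dPz := dP z cz.
  apply: is_derive_eq.
  rewrite [in LHS]/GRing.scale/= sub0r.
  have nz : n.+1%:R != 0 :> R by rewrite pnatr_eq0.
  by field; rewrite gt_eqF ?Rpos ?(lt_trans c00)//=.
have cP z : c0 < z -> {for z, continuous P}.
  move=> cz; apply: differentiable_continuous; apply/derivable1_diffP.
  have dPz := dP z cz; exact: ex_derive.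
have KP0 : (K - P z) @[z --> +oo] --> 0.
  rewrite -(subrr K); apply: cvgB => //; exact: cvg_cst.
rewrite (@ge0_continuous_FTC2y R (fun z => D * (K - P z) ^+ n / Rf z) Phi x 0).
- by rewrite PhiE sub0e -EFinN mulNr opprK.
- move=> z xz; have z0 : 0 < z by rewrite (lt_le_trans c00)// (le_trans (ltW cx)).
  rewrite mulr_ge0 //; first by rewrite mulr_ge0 // exprn_ge0 // subr_ge0.
  by rewrite invr_ge0 ltW // Rpos.
- apply: continuous_in_subspaceT => z; rewrite inE/= in_itv/= andbT => xz.
  have cz : c0 < z by exact: lt_le_trans xz.
  apply: cvgM; last exact: (cRi cR Rpos) (lt_trans c00 cz).
  apply: cvgM; first exact: cvg_cst.
  by apply: cvgXn; apply: cvgB; [exact: cvg_cst | exact: cP].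
- have hPhi : - (D / n.+1%:R) * (K - P z) ^+ n.+1 @[z --> +oo%R] --> (0 : R).
    have -> : 0 = - (D / n.+1%:R) * 0 ^+ n.+1 :> R by rewrite expr0n mulr0.
    exact: cvgMl_tmp (cvgXn (n := n.+1) KP0).
  have -> : Phi = (fun z => - (D / n.+1%:R) * (K - P z) ^+ n.+1).
    by apply/funext => z; exact: PhiE.
  exact: hPhi.
- by move=> z xz; have dPz := dPhi z (lt_trans cx xz); exact: ex_derive.
- apply: cvg_at_right_filter; apply: differentiable_continuous; apply/derivable1_diffP.
  have dPz := dPhi x cx; exact: ex_derive.
- move=> z; rewrite in_itv/= andbT => xz.
  have dPz := dPhi z (lt_trans cx xz).
  by rewrite derive1E derive_val.
Qed.


Lemma exp_eseries (R : realType) (y : R) : 0 <= y ->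
  (\sum_(0 <= n <oo) ((y ^+ n / n`!%:R)%:E) <= (expR y)%:E)%E.
Proof.
move=> y0; apply: lime_le.
  by apply: is_cvg_nneseries => n _ _; rewrite lee_fin divr_ge0// exprn_ge0.
apply: nearW => N; rewrite sumEFin lee_fin.
have := @nondecreasing_cvgn_le R (series (exp_coeff y)) _ (is_cvg_series_exp_coeff y) N.
apply.
apply: nondecreasing_series => n _ _.
by rewrite /exp_coeff/= divr_ge0// exprn_ge0.
Qed.


End Helpers.

Theorem proposition4p5 (R : realType) (gamma sigma : R)
  (pi : {measure set (measurableTypeR R) -> \bar R}) (Rf W : R -> R) :
  0 <= sigma ->
  pi [set` `]-oo, 0]] = 0%E ->
  (\int[pi]_(z in `]0%R, +oo[) (Num.min z (z ^+ 2))%:E < +oo)%E ->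
  {within `[0, +oo[, continuous Rf} ->
  (forall x, 0 < x -> 0 < Rf x) ->
  (forall x, x < 0 -> W x = 0) ->
  {within `[0, +oo[, continuous W} ->
  {in `[0, +oo[ &, forall x y, x < y -> W x < W y} ->
  (forall q, 0 < q ->
     (\int[@lebesgue_measure R]_(y in `[0%R, +oo[) (expR (- (q * y)) * W y)%:E
      = ((Psi gamma sigma pi q)^-1)%:E)%E) ->
  0 < gamma ->
  (exists a, 0 < a /\
     (\int[@lebesgue_measure R]_(x in `[a%R, +oo[) ((Rf x)^-1)%:E < +oo)%E) ->
  forall b lam, 0 < b -> 0 < lam ->
    (\sum_(0 <= n <oo) ((lam ^+ n)%:E * Wn W Rf n b) < +oo)%E.
Proof.
move=> _ _ _ cR Rpos _ cW Winc Lap g0 [a [a0 Ia]] b lam b0 lam0.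
have W00 := W0_ge0 g0 cW Winc Lap.
have Wge0 y : 0 <= y -> 0 <= W y.
  by move=> y0; apply: le_trans W00 (W_mono Winc (lexx 0) y0).
pose C := 2 * expR 1 / gamma.
have C0 : 0 <= C by rewrite /C divr_ge0 ?mulr_ge0 ?expR_ge0// ltW.
have WC y : 0 <= y -> W y <= C by move=> y0; exact: (W_bound g0 Wge0 Winc Lap).
pose c0 := Num.min (b / 2) a.
have c00 : 0 < c0 by rewrite lt_min a0 divr_gt0.
have c0a : c0 <= a by rewrite ge_min lexx orbT.
have c0b : c0 < b by rewrite gt_min; apply/orP; left; lra.
have [M hM] := PP_ub cR Rpos c00 c0a Ia.
pose P := PP Rf c0.
have hubP : has_ubound (range P) by exists M => _ [z _ <-]; exact: hM.
pose K := sup (range P).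
have PK : P z @[z --> +oo] --> K.
  by apply: nondecreasing_cvgr => //; exact: PP_nd.
have PleK z : P z <= K.
  have supP : has_sup (range P) by split; [exists (P 0), 0 | exact: hubP].
  by have /ubP := sup_upper_bound supP; apply; exists z.
pose F z := K - P z.
have F0 z : 0 <= F z by rewrite /F subr_ge0.
have claim n : forall x, b <= x ->
    (0 <= Wn W Rf n x /\ Wn W Rf n x <= (C ^+ n / n`!%:R * F x ^+ n)%:E)%E.
  elim: n => [|n IH] x bx.
    by rewrite /= !expr0 fact0 invr1 !mulr1 lexx lee01.
  have bz z : x <= z -> b <= z by move=> xz; exact: le_trans bx xz.
  have zpos z : x <= z -> 0 < z by move=> xz; exact: lt_le_trans b0 (bz z xz).
  have h0 z : x <= z -> (0 <= (W (z - x) / Rf z)%:E)%E.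
    move=> xz; rewrite lee_fin divr_ge0 ?Wge0 ?subr_ge0// ltW// Rpos//.
    exact: zpos.
  split.
    apply: integral_ge0 => z; rewrite /= in_itv/= andbT => xz.
    by apply: mule_ge0; [exact: h0|exact: (IH z (bz z xz)).1].
  rewrite [Wn _ _ _ _]/=.
  apply: (@le_trans _ _ (\int[@lebesgue_measure R]_(z in `[x, +oo[) ((C ^+ n.+1 / n`!%:R) * (K - P z) ^+ n * (Rf z)^-1)%:E)%E).
    apply: int_mono.
    - by move=> z; rewrite /= in_itv/= andbT => xz; apply: mule_ge0; [exact: h0|exact: (IH z (bz z xz)).1].
    move=> z; rewrite /= in_itv/= andbT => xz.
    have [IH1 IH2] := IH z (bz z xz).
    apply: le_trans (lee_pmul (h0 z xz) IH1 (_ : _ <= (C / Rf z)%:E)%E IH2) _.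
      rewrite lee_fin ler_pM2r ?invr_gt0 ?Rpos ?zpos//.
      by apply: WC; rewrite subr_ge0.
    rewrite -EFinM lee_fin /F le_eqVlt; apply/orP; left; apply/eqP.
    by rewrite exprS; field; rewrite gt_eqF ?Rpos ?zpos//= pnatr_eq0 -lt0n fact_gt0.
  rewrite (FTC_step cR Rpos) //; last 2 first.
  - exact: lt_le_trans c0b bx.
  - by rewrite divr_ge0// exprn_ge0.
  rewrite lee_fin /F le_eqVlt; apply/orP; left; apply/eqP.
  rewrite factS natrM; field.
  rewrite pnatr_eq0 -lt0n fact_gt0/=.
  by apply/negP => /eqP; have := ler0n R n; lra.
pose y := lam * C * F b.
have y0 : 0 <= y.
  by apply: mulr_ge0; [apply: mulr_ge0; [exact: ltW | exact: C0] | exact: F0].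
apply: (le_lt_trans _ (ltry (expR y))).
apply: le_trans (exp_eseries y0).
apply: lee_nneseries => n _.
  move=> _; apply: mule_ge0; first by rewrite lee_fin exprn_ge0// ltW.
  exact: (claim n b (lexx b)).1.
have [h1 h2] := claim n b (lexx b).
apply: le_trans (lee_pmul _ h1 (lexx _) h2) _; first by rewrite lee_fin exprn_ge0// ltW.
rewrite -EFinM lee_fin /y le_eqVlt; apply/orP; left; apply/eqP.
by rewrite !exprMn; ring.
Qed.
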